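(* Consider the four-agent technology adoption game. There exists $\varepsilon_0>0$ such that for every $\varepsilon\in(0,\varepsilon_0)$ there is a nonempty open interval $J\subset(0,1)$ of costs such that for every $c\in J$: in the line network seeded via agent 1 there is an equilibrium in which the probability that all four agents adopt is strictly greater than the probability that all four adopt in every equilibrium of the cycle network seeded via agent 1.
   Context: Fix $\rho\in(0,1)$, $\varepsilon\in(0,1)$, agents $\{1,2,3,4\}$, state $\theta\in\{g,b\}$ with $\Pr(\theta=g)=\rho$. In state $b$ no messages are sent. In state $g$ messages travel along directed arcs, each transmission lost independently with probability $\varepsilon$, and an agent sends along her outgoing arcs only if she received at least one message. Line network seeded via 1: arcs $0\to1\to2\to3\to4$ (0 is the planner); each agent observes only whether she received a message. Cycle network (undirected cycle $1-2-3-4-1$) seeded via 1: arcs $0\to1$, $1\to2$, $1\to4$, $2\to3$, $4\to3$; agents $1,2,4$ observe whether they received a message; agent 3 observes which of the arcs $2\to3$, $4\to3$ delivered a message (types: only from 2, only from 4, from both, from neither). Technology adoption game with cost $c\in(0,1)$: each agent chooses $a_i\in\{0,1\}$ as a function of her information (possibly mixed); payoff $a_i(\mathbf 1[\theta=g\text{ and all four adopt}]-c)$; equilibria are Bayesian Nash equilibria. *)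

(* Defs.v *)
From HB Require Import structures.
From mathcomp Require Import all_boot all_order all_algebra.
From mathcomp Require Import reals.
Set Implicit Arguments. Unset Strict Implicit. Unset Printing Implicit Defensive.
Import Order.TTheory GRing.Theory Num.Theory.
Local Open Scope ring_scope.

(* Sample space for a network with n arcs: the state (true = g, false = b)
   and, for every arc, whether the transmission along it succeeds.
   Arc outcomes are drawn independently (success w.p. 1 - eps); in state b
   nothing is ever sent, so arc outcomes are then irrelevant. *)
Notation Omega n := (bool * {ffun 'I_n -> bool})%type.

Definition prob (R : realType) (n : nat) (rho eps : R) (w : Omega n) : R :=
  (if w.1 then rho else 1 - rho) *
  \prod_(a < n) (if w.2 a then 1 - eps else eps).

(* Agents 1,2,3,4 are represented by i : 'I_4 with value i-1.
   An agent's information (type) is an element of bool * bool.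
   Agents that only observe whether they received a message get the type
   (received?, false); in the cycle, agent 3 gets (from 2?, from 4?). *)
Definition info := (bool * bool)%type.

(* Line network: arcs 0->1, 1->2, 2->3, 3->4 are arcs 0,1,2,3.
   Agent k (0-based) receives iff state g and arcs 0..k all succeed. *)
Definition line_recv (w : Omega 4) (i : 'I_4) : bool :=
  w.1 && [forall a : 'I_4, (a <= i)%N ==> w.2 a].

Definition line_sig (w : Omega 4) (i : 'I_4) : info := (line_recv w i, false).

(* Cycle network: arcs 0->1, 1->2, 1->4, 2->3, 4->3 are arcs 0,1,2,3,4. *)
Definition cyc_r1 (w : Omega 5) : bool := w.1 && w.2 (@Ordinal 5 0 isT).
Definition cyc_r2 (w : Omega 5) : bool := cyc_r1 w && w.2 (@Ordinal 5 1 isT).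
Definition cyc_r4 (w : Omega 5) : bool := cyc_r1 w && w.2 (@Ordinal 5 2 isT).
Definition cyc_from2 (w : Omega 5) : bool := cyc_r2 w && w.2 (@Ordinal 5 3 isT).
Definition cyc_from4 (w : Omega 5) : bool := cyc_r4 w && w.2 (@Ordinal 5 4 isT).

Definition cycle_sig (w : Omega 5) (i : 'I_4) : info :=
  match nat_of_ord i with
  | 0 => (cyc_r1 w, false)
  | 1 => (cyc_r2 w, false)
  | 2 => (cyc_from2 w, cyc_from4 w)
  | _ => (cyc_r4 w, false)
  end.

(* Behavioural (possibly mixed) strategy profiles: probability of adopting
   as a function of the agent and her information. *)
Definition profile (R : realType) := 'I_4 -> info -> R.

Definition valid_strategy (R : realType) (f : info -> R) : Prop :=
  forall t, 0 <= f t <= 1.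

Definition upd (R : realType) (s : profile R) (i : 'I_4) (f : info -> R)
  : profile R := fun j => if j == i then f else s j.

Definition payoff (R : realType) (n : nat) (sig : Omega n -> 'I_4 -> info)
  (rho eps c : R) (s : profile R) (i : 'I_4) : R :=
  \sum_(w : Omega n) prob rho eps w * s i (sig w i) *
     ((if w.1 then \prod_(j < 4 | j != i) s j (sig w j) else 0) - c).

Definition is_BNE (R : realType) (n : nat) (sig : Omega n -> 'I_4 -> info)
  (rho eps c : R) (s : profile R) : Prop :=
  (forall i, valid_strategy (s i)) /\
  forall (i : 'I_4) (f : info -> R), valid_strategy f ->
    payoff sig rho eps c (upd s i f) i <= payoff sig rho eps c s i.

Definition prob_all_adopt (R : realType) (n : nat) (sig : Omega n -> 'I_4 -> info)
  (rho eps : R) (s : profile R) : R :=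
  \sum_(w : Omega n) prob rho eps w * \prod_(j < 4) s j (sig w j).

(* Main.v *)
Require Import Defs.
From HB Require Import structures.
From mathcomp Require Import all_boot all_order all_algebra.
From mathcomp Require Import reals.
From mathcomp Require Import ring lra.
Import Order.TTheory GRing.Theory Num.Theory.
Set Implicit Arguments. Unset Strict Implicit. Unset Printing Implicit Defensive.
Local Open Scope ring_scope.

Definition mk5 (b0 b1 b2 b3 b4 : bool) : {ffun 'I_5 -> bool} :=
  [ffun a : 'I_5 => nth false [:: b0; b1; b2; b3; b4] a].
Definition mk4 (b0 b1 b2 b3 : bool) : {ffun 'I_4 -> bool} :=
  [ffun a : 'I_4 => nth false [:: b0; b1; b2; b3] a].

Definition pth (R : realType) (rho : R) (th : bool) : R := if th then rho else 1 - rho.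
Definition qb (R : realType) (eps : R) (b : bool) : R := if b then 1 - eps else eps.

Lemma sumF5 (R : realType) (H : {ffun 'I_5 -> bool} -> R) :
  \sum_(F : {ffun 'I_5 -> bool}) H F =
  \sum_(b0 : bool) \sum_(b1 : bool) \sum_(b2 : bool) \sum_(b3 : bool) \sum_(b4 : bool)
     H (mk5 b0 b1 b2 b3 b4).
Proof.
rewrite (reindex (fun p : bool * (bool * (bool * (bool * bool))) =>
   mk5 p.1 p.2.1 p.2.2.1 p.2.2.2.1 p.2.2.2.2)) /=.
  rewrite -(pair_bigA _ (fun b0 (p : bool*(bool*(bool*bool))) =>
     H (mk5 b0 p.1 p.2.1 p.2.2.1 p.2.2.2))) /=; apply: eq_bigr => b0 _.
  rewrite -(pair_bigA _ (fun b1 (p : bool*(bool*bool)) =>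
     H (mk5 b0 b1 p.1 p.2.1 p.2.2))) /=; apply: eq_bigr => b1 _.
  rewrite -(pair_bigA _ (fun b2 (p : bool*bool) =>
     H (mk5 b0 b1 b2 p.1 p.2))) /=; apply: eq_bigr => b2 _.
  by rewrite -(pair_bigA _ (fun b3 b4 => H (mk5 b0 b1 b2 b3 b4))).
exists (fun F : {ffun 'I_5 -> bool} =>
   (F (@Ordinal 5 0 isT), (F (@Ordinal 5 1 isT), (F (@Ordinal 5 2 isT),
     (F (@Ordinal 5 3 isT), F (@Ordinal 5 4 isT)))))).
  by move=> [b0 [b1 [b2 [b3 b4]]]] _; rewrite !ffunE.
move=> F _; apply/ffunP => -[[|[|[|[|[|i]]]]] Hi] //; rewrite ffunE /=;
  congr (F _); exact: val_inj.
Qed.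

Lemma prob5 (R : realType) (rho eps : R) th b0 b1 b2 b3 b4 :
  prob rho eps (th, mk5 b0 b1 b2 b3 b4) =
  pth rho th * (qb eps b0 * qb eps b1 * qb eps b2 * qb eps b3 * qb eps b4).
Proof.
rewrite /prob /= !big_ord_recl big_ord0 !ffunE /= /pth /qb. by rewrite !mulrA mulr1.
Qed.

Lemma sum5 (R : realType) (rho eps : R) (G : Omega 5 -> R) :
  \sum_(w : Omega 5) prob rho eps w * G w =
  \sum_(th : bool) \sum_(b0 : bool) \sum_(b1 : bool) \sum_(b2 : bool) \sum_(b3 : bool) \sum_(b4 : bool)
    pth rho th * (qb eps b0 * qb eps b1 * qb eps b2 * qb eps b3 * qb eps b4) *
    G (th, mk5 b0 b1 b2 b3 b4).
Proof.
rewrite (eq_bigr (fun w => prob rho eps (w.1,w.2) * G (w.1,w.2))); last by case.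
rewrite -(pair_bigA _ (fun th F => prob rho eps (th, F) * G (th, F))) /=; apply: eq_bigr => th _.
rewrite sumF5; do 5 (apply: eq_bigr => ? _).
by rewrite prob5.
Qed.


Lemma prob4 (R : realType) (rho eps : R) th b0 b1 b2 b3 :
  prob rho eps (th, mk4 b0 b1 b2 b3) =
  pth rho th * (qb eps b0 * qb eps b1 * qb eps b2 * qb eps b3).
Proof.
rewrite /prob /= !big_ord_recl big_ord0 !ffunE /= /pth /qb. by rewrite !mulrA mulr1.
Qed.

Lemma sumF4 (R : realType) (H : {ffun 'I_4 -> bool} -> R) :
  \sum_(F : {ffun 'I_4 -> bool}) H F =
  \sum_(b0 : bool) \sum_(b1 : bool) \sum_(b2 : bool) \sum_(b3 : bool)
     H (mk4 b0 b1 b2 b3).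
Proof.
rewrite (reindex (fun p : bool * (bool * (bool * bool)) =>
   mk4 p.1 p.2.1 p.2.2.1 p.2.2.2)) /=.
  rewrite -(pair_bigA _ (fun b0 (p : bool*(bool*bool)) =>
     H (mk4 b0 p.1 p.2.1 p.2.2))) /=; apply: eq_bigr => b0 _.
  rewrite -(pair_bigA _ (fun b1 (p : bool*bool) =>
     H (mk4 b0 b1 p.1 p.2))) /=; apply: eq_bigr => b1 _.
  by rewrite -(pair_bigA _ (fun b2 b3 => H (mk4 b0 b1 b2 b3))).
exists (fun F : {ffun 'I_4 -> bool} =>
   (F (@Ordinal 4 0 isT), (F (@Ordinal 4 1 isT), (F (@Ordinal 4 2 isT),
     F (@Ordinal 4 3 isT))))).
  by move=> [b0 [b1 [b2 b3]]] _; rewrite !ffunE.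
move=> F _; apply/ffunP => -[[|[|[|[|i]]]] Hi] //; rewrite ffunE /=;
  congr (F _); exact: val_inj.
Qed.

Lemma sum4 (R : realType) (rho eps : R) (G : Omega 4 -> R) :
  \sum_(w : Omega 4) prob rho eps w * G w =
  \sum_(th : bool) \sum_(b0 : bool) \sum_(b1 : bool) \sum_(b2 : bool) \sum_(b3 : bool)
    pth rho th * (qb eps b0 * qb eps b1 * qb eps b2 * qb eps b3) *
    G (th, mk4 b0 b1 b2 b3).
Proof.
rewrite (eq_bigr (fun w => prob rho eps (w.1,w.2) * G (w.1,w.2))); last by case.
rewrite -(pair_bigA _ (fun th F => prob rho eps (th, F) * G (th, F))) /=; apply: eq_bigr => th _.
rewrite sumF4; do 4 (apply: eq_bigr => ? _).
by rewrite prob4.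
Qed.

Lemma line_recv_mk th b0 b1 b2 b3 (i : 'I_4) :
  line_recv (th, mk4 b0 b1 b2 b3) i =
  [&& th, b0, ((1 <= i)%N ==> b1), ((2 <= i)%N ==> b2) & ((3 <= i)%N ==> b3)].
Proof.
rewrite /line_recv /=; case: th => //=.
apply/forallP/idP.
  move=> H; move: (H (@Ordinal 4 0 isT)) (H (@Ordinal 4 1 isT))
    (H (@Ordinal 4 2 isT)) (H (@Ordinal 4 3 isT)); rewrite !ffunE /=.
  by move=> -> -> -> ->.
move=> /and4P [H0 H1 H2 H3] [[|[|[|[|a]]]] Ha] //; rewrite ffunE /= ?H0 ?implybT //.
Qed.

Definition o0 : 'I_4 := @Ordinal 4 0 isT.
Definition o1 : 'I_4 := @Ordinal 4 1 isT.
Definition o2 : 'I_4 := @Ordinal 4 2 isT.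
Definition o3 : 'I_4 := @Ordinal 4 3 isT.

Lemma ord4_cases (i : 'I_4) : [\/ i = o0, i = o1, i = o2 | i = o3].
Proof.
case: i => [[|[|[|[|m]]]] Hi] //.
- by apply: Or41; apply: val_inj.
- by apply: Or42; apply: val_inj.
- by apply: Or43; apply: val_inj.
- by apply: Or44; apply: val_inj.
Qed.

Definition Kf (R : realType) (n : nat) (sig : Omega n -> 'I_4 -> info) (c : R)
  (s : profile R) (i : 'I_4) (w : Omega n) : R :=
  (if w.1 then \prod_(j < 4 | j != i) s j (sig w j) else 0) - c.

Definition Coef (R : realType) (n : nat) (sig : Omega n -> 'I_4 -> info) (rho eps c : R)
  (s : profile R) (i : 'I_4) (t : info) : R :=
  \sum_(w : Omega n) prob rho eps w * ((sig w i == t)%:R * Kf sig c s i w).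

Lemma decomp (R : realType) n (sig : Omega n -> 'I_4 -> info) (rho eps c : R)
  (s : profile R) i (g : info -> R) :
  \sum_(w : Omega n) prob rho eps w * g (sig w i) * Kf sig c s i w =
  \sum_(t : info) g t * Coef sig rho eps c s i t.
Proof.
under [RHS]eq_bigr => t _ do rewrite /Coef mulr_sumr.
rewrite exchange_big /=; apply: eq_bigr => w _.
rewrite (bigD1 (sig w i)) //= eqxx big1 ?addr0; first by rewrite /=; ring.
move=> t Ht; have -> : (sig w i == t) = false by apply/negbTE; rewrite eq_sym.
by rewrite /= !(mul0r, mulr0).
Qed.

Lemma payoff_s (R : realType) n (sig : Omega n -> 'I_4 -> info) (rho eps c : R)
  (s : profile R) i :
  payoff sig rho eps c s i =
  \sum_(w : Omega n) prob rho eps w * s i (sig w i) * Kf sig c s i w.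
Proof. by []. Qed.

Lemma payoff_upd (R : realType) n (sig : Omega n -> 'I_4 -> info) (rho eps c : R)
  (s : profile R) i f :
  payoff sig rho eps c (upd s i f) i =
  \sum_(w : Omega n) prob rho eps w * f (sig w i) * Kf sig c s i w.
Proof.
rewrite /payoff /Kf /upd eqxx; apply: eq_bigr => w _.
congr (_ * _ * (_ - _)); case: w.1 => //.
by apply: eq_bigr => j Hj; rewrite (negbTE Hj).
Qed.

Lemma dev_zero (R : realType) n (sig : Omega n -> 'I_4 -> info) (rho eps c : R)
  (s : profile R) i t :
  is_BNE sig rho eps c s -> Coef sig rho eps c s i t < 0 -> s i t = 0.
Proof.
move=> [Hv Hb] HC.
pose f := fun t' => if t' == t then 0 else s i t'.
have Hf : valid_strategy f.
  by move=> t'; rewrite /f; case: eqP => _; [rewrite lexx ler01 | exact: Hv].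
have := Hb i f Hf; rewrite payoff_upd payoff_s !decomp.
rewrite (bigD1 t) //= [X in _ <= X](bigD1 t) //=.
under eq_bigr => t' Ht' do rewrite /f (negbTE Ht').
rewrite /f eqxx mul0r add0r lerDr => H.
have /andP [H0 H1] := Hv i t.
apply/eqP; rewrite eq_le H0 andbT; nra.
Qed.

Lemma bne_suff (R : realType) n (sig : Omega n -> 'I_4 -> info) (rho eps c : R)
  (s : profile R) :
  (forall i, valid_strategy (s i)) ->
  (forall i t, (s i t = 1 /\ 0 <= Coef sig rho eps c s i t) \/
               (s i t = 0 /\ Coef sig rho eps c s i t <= 0)) ->
  is_BNE sig rho eps c s.
Proof.
move=> Hv H; split => // i f Hf.
rewrite payoff_upd payoff_s !decomp; apply: ler_sum => t _.
have /andP [f0 f1] := Hf t.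
by case: (H i t) => [[-> HC]|[-> HC]]; nra.
Qed.

Lemma prod_le_k (R : realType) (F : 'I_4 -> R) (i k : 'I_4) :
  (forall j, 0 <= F j <= 1) -> k != i -> \prod_(j < 4 | j != i) F j <= F k.
Proof.
move=> HF Hk; rewrite (bigD1 k) //=.
have /andP [a b] := HF k.
have h0 : 0 <= \prod_(j < 4 | (j != i) && (j != k)) F j.
  by apply: prodr_ge0 => j _; case/andP: (HF j).
have h1 : \prod_(j < 4 | (j != i) && (j != k)) F j <= 1.
  by apply: prodr_ile1 => j _; exact: HF.
nra.
Qed.

Lemma prob_ge0 (R : realType) n (rho eps : R) (w : Omega n) :
  0 <= rho <= 1 -> 0 <= eps <= 1 -> 0 <= prob rho eps w.
Proof.
move=> /andP[r0 r1] /andP[e0 e1]; rewrite /prob; apply: mulr_ge0.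
  by case: w.1; lra.
by apply: prodr_ge0 => a _; case: (w.2 a); lra.
Qed.

Lemma coef_le (R : realType) n (sig : Omega n -> 'I_4 -> info) (rho eps c : R)
  (s : profile R) i t (U : Omega n -> R) :
  0 <= rho <= 1 -> 0 <= eps <= 1 ->
  (forall w, sig w i = t -> w.1 -> \prod_(j < 4 | j != i) s j (sig w j) <= U w) ->
  Coef sig rho eps c s i t <=
  \sum_(w : Omega n) prob rho eps w * ((sig w i == t)%:R * ((if w.1 then U w else 0) - c)).
Proof.
move=> Hr He HU; apply: ler_sum => w _; apply: ler_wpM2l; first exact: prob_ge0.
case: eqP => Ht /=; last by rewrite !mul0r.
apply: ler_wpM2l => //; rewrite /Kf lerD2r.
by case Hw: w.1 => //; apply: HU.
Qed.

Lemma coef_ge (R : realType) n (sig : Omega n -> 'I_4 -> info) (rho eps c : R)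
  (s : profile R) i t (L : Omega n -> R) :
  0 <= rho <= 1 -> 0 <= eps <= 1 ->
  (forall w, sig w i = t -> w.1 -> L w <= \prod_(j < 4 | j != i) s j (sig w j)) ->
  \sum_(w : Omega n) prob rho eps w * ((sig w i == t)%:R * ((if w.1 then L w else 0) - c))
  <= Coef sig rho eps c s i t.
Proof.
move=> Hr He HU; apply: ler_sum => w _; apply: ler_wpM2l; first exact: prob_ge0.
case: eqP => Ht /=; last by rewrite !mul0r.
apply: ler_wpM2l => //; rewrite /Kf lerD2r.
by case Hw: w.1 => //; apply: HU.
Qed.

Ltac crunch5 := rewrite sum5 !big_bool /= /cycle_sig /o0 /o1 /o2 /o3 /=
  /cyc_from2 /cyc_from4 /cyc_r2 /cyc_r4 /cyc_r1 /= !ffunE /= /pth /qb; ring.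
Ltac crunch4 := rewrite sum4 !big_bool /= /line_sig /o0 /o1 /o2 /o3 /=
  !line_recv_mk /= /pth /qb; ring.

Lemma C1 (R : realType) (rho eps c : R) :
  \sum_(w : Omega 5) prob rho eps w * ((cycle_sig w o0 == (false,false))%:R *
     ((if w.1 then 1 else 0) - c)) = rho*eps - c*(1-rho+rho*eps).
Proof. crunch5. Qed.

Lemma C2 (R : realType) (rho eps c : R) :
  \sum_(w : Omega 5) prob rho eps w * ((cycle_sig w o1 == (false,false))%:R *
     ((if w.1 then (if cyc_r1 w then 1 else 0) else 0) - c)) =
  rho*(1-eps)*eps - c*(1-rho*(1-eps)^+2).
Proof. crunch5. Qed.

Lemma C4 (R : realType) (rho eps c : R) :
  \sum_(w : Omega 5) prob rho eps w * ((cycle_sig w o3 == (false,false))%:R *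
     ((if w.1 then (if cyc_r1 w then 1 else 0) else 0) - c)) =
  rho*(1-eps)*eps - c*(1-rho*(1-eps)^+2).
Proof. crunch5. Qed.

Lemma C3a (R : realType) (rho eps c : R) :
  \sum_(w : Omega 5) prob rho eps w * ((cycle_sig w o2 == (true,false))%:R *
     ((if w.1 then (if cyc_r4 w then 1 else 0) else 0) - c)) =
  rho*(1-eps)^+4*eps - c*(rho*(1-eps)^+3*(1-(1-eps)^+2)).
Proof. crunch5. Qed.

Lemma C3b (R : realType) (rho eps c : R) :
  \sum_(w : Omega 5) prob rho eps w * ((cycle_sig w o2 == (false,true))%:R *
     ((if w.1 then (if cyc_r2 w then 1 else 0) else 0) - c)) =
  rho*(1-eps)^+4*eps - c*(rho*(1-eps)^+3*(1-(1-eps)^+2)).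
Proof. crunch5. Qed.

Lemma C5 (R : realType) (rho eps c : R) :
  \sum_(w : Omega 5) prob rho eps w * ((cycle_sig w o0 == (true,false))%:R *
     ((if w.1 then (if cyc_from2 w == cyc_from4 w then 1 else 0) else 0) - c)) =
  rho*(1-eps)*((1-eps)^+4 + (1-(1-eps)^+2)^+2) - c*(rho*(1-eps)).
Proof. crunch5. Qed.

Definition s_line (R : realType) : profile R := fun j t => if t.1 then 1 else 0.

Lemma L0 (R : realType) (rho eps c : R) :
  \sum_(w : Omega 4) prob rho eps w * ((line_sig w o0 == (true,false))%:R *
     ((if w.1 then (if line_recv w o3 then 1 else 0) else 0) - c)) =
  rho*(1-eps)^+4 - c*(rho*(1-eps)).
Proof. crunch4. Qed.
Lemma L1 (R : realType) (rho eps c : R) :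
  \sum_(w : Omega 4) prob rho eps w * ((line_sig w o1 == (true,false))%:R *
     ((if w.1 then (if line_recv w o3 then 1 else 0) else 0) - c)) =
  rho*(1-eps)^+4 - c*(rho*(1-eps)^+2).
Proof. crunch4. Qed.
Lemma L2 (R : realType) (rho eps c : R) :
  \sum_(w : Omega 4) prob rho eps w * ((line_sig w o2 == (true,false))%:R *
     ((if w.1 then (if line_recv w o3 then 1 else 0) else 0) - c)) =
  rho*(1-eps)^+4 - c*(rho*(1-eps)^+3).
Proof. crunch4. Qed.
Lemma L3 (R : realType) (rho eps c : R) :
  \sum_(w : Omega 4) prob rho eps w * ((line_sig w o3 == (true,false))%:R *
     ((if w.1 then (if line_recv w o2 then 1 else 0) else 0) - c)) =
  rho*(1-eps)^+4 - c*(rho*(1-eps)^+4).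
Proof. crunch4. Qed.
Lemma U0 (R : realType) (rho eps c : R) :
  \sum_(w : Omega 4) prob rho eps w * ((line_sig w o0 == (false,false))%:R *
     ((if w.1 then (if line_recv w o3 then 1 else 0) else 0) - c)) =
  - c*(1 - rho*(1-eps)).
Proof. crunch4. Qed.
Lemma U1 (R : realType) (rho eps c : R) :
  \sum_(w : Omega 4) prob rho eps w * ((line_sig w o1 == (false,false))%:R *
     ((if w.1 then (if line_recv w o3 then 1 else 0) else 0) - c)) =
  - c*(1 - rho*(1-eps)^+2).
Proof. crunch4. Qed.
Lemma U2 (R : realType) (rho eps c : R) :
  \sum_(w : Omega 4) prob rho eps w * ((line_sig w o2 == (false,false))%:R *
     ((if w.1 then (if line_recv w o3 then 1 else 0) else 0) - c)) =
  - c*(1 - rho*(1-eps)^+3).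
Proof. crunch4. Qed.
Lemma U3 (R : realType) (rho eps c : R) :
  \sum_(w : Omega 4) prob rho eps w * ((line_sig w o3 == (false,false))%:R *
     ((if w.1 then (if line_recv w o2 then 1 else 0) else 0) - c)) =
  rho*(1-eps)^+3*eps - c*(1 - rho*(1-eps)^+4).
Proof. crunch4. Qed.

Lemma Pline (R : realType) (rho eps : R) :
  prob_all_adopt line_sig rho eps (@s_line R) = rho*(1-eps)^+4.
Proof.
rewrite /prob_all_adopt sum4 !big_bool /= !big_ord_recl big_ord0 /s_line /line_sig /=
  !line_recv_mk /= /pth /qb; ring.
Qed.

Lemma line_recv_mono (w : Omega 4) (j k : 'I_4) :
  line_recv w k -> (j <= k)%N -> line_recv w j.
Proof.
rewrite /line_recv => /andP[-> /forallP H] Hjk /=; apply/forallP => a.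
apply/implyP => Ha; exact: (implyP (H a) (leq_trans Ha Hjk)).
Qed.

Lemma s_line_valid (R : realType) j t : 0 <= @s_line R j t <= 1.
Proof. by rewrite /s_line; case: t.1; rewrite ?lexx ?ler01. Qed.

Lemma line_prod_ge (R : realType) (i k : 'I_4) (w : Omega 4) :
  (forall j : 'I_4, j != i -> (j <= k)%N) ->
  (if line_recv w k then 1 else 0) <= \prod_(j < 4 | j != i) @s_line R j (line_sig w j).
Proof.
move=> H; case Hk: (line_recv w k).
  by rewrite big1 // => j Hj; rewrite /s_line /= (line_recv_mono Hk (H j Hj)).
by apply: prodr_ge0 => j _; case/andP: (s_line_valid R j (line_sig w j)).
Qed.

Lemma coef_line_snd (R : realType) (rho eps c : R) i b :
  Coef line_sig rho eps c (@s_line R) i (b, true) = 0.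
Proof.
by apply: big1 => w _; rewrite /line_sig xpair_eqE andbF mul0r mulr0.
Qed.

Lemma le3 (j : 'I_4) : (j <= o3)%N.
Proof. by case: j => j Hj /=; rewrite -ltnS. Qed.

Lemma le2 (j : 'I_4) : j != o3 -> (j <= o2)%N.
Proof. by case: j => [[|[|[|[|j]]]] Hj] //= H; case/eqP: H; apply: val_inj. Qed.

Lemma line_bne (R : realType) (rho eps c : R) :
  0 <= rho <= 1 -> 0 <= eps <= 1 ->
  0 <= rho*(1-eps)^+4 - c*(rho*(1-eps)) ->
  0 <= rho*(1-eps)^+4 - c*(rho*(1-eps)^+2) ->
  0 <= rho*(1-eps)^+4 - c*(rho*(1-eps)^+3) ->
  0 <= rho*(1-eps)^+4 - c*(rho*(1-eps)^+4) ->
  - c*(1 - rho*(1-eps)) <= 0 ->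
  - c*(1 - rho*(1-eps)^+2) <= 0 ->
  - c*(1 - rho*(1-eps)^+3) <= 0 ->
  rho*(1-eps)^+3*eps - c*(1 - rho*(1-eps)^+4) <= 0 ->
  is_BNE line_sig rho eps c (@s_line R).
Proof.
move=> Hr He M0 M1 M2 M3 V0 V1 V2 V3.
apply: bne_suff; first by move=> j t; exact: s_line_valid.
move=> i [[] []].
- by left; split => //; rewrite coef_line_snd.
- left; split => //.
  case: (ord4_cases i) => ->.
  + have := @coef_ge R 4 line_sig rho eps c (@s_line R) o0 (true,false)
      (fun w => if line_recv w o3 then 1 else 0) Hr He.
    rewrite L0 => H; apply: le_trans M0 (H _) => w _ _; apply: line_prod_ge => j _; exact: le3.
  + have := @coef_ge R 4 line_sig rho eps c (@s_line R) o1 (true,false)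
      (fun w => if line_recv w o3 then 1 else 0) Hr He.
    rewrite L1 => H; apply: le_trans M1 (H _) => w _ _; apply: line_prod_ge => j _; exact: le3.
  + have := @coef_ge R 4 line_sig rho eps c (@s_line R) o2 (true,false)
      (fun w => if line_recv w o3 then 1 else 0) Hr He.
    rewrite L2 => H; apply: le_trans M2 (H _) => w _ _; apply: line_prod_ge => j _; exact: le3.
  + have := @coef_ge R 4 line_sig rho eps c (@s_line R) o3 (true,false)
      (fun w => if line_recv w o2 then 1 else 0) Hr He.
    rewrite L3 => H; apply: le_trans M3 (H _) => w _ _; apply: line_prod_ge => j; exact: le2.
- by right; split => //; rewrite coef_line_snd.
- right; split => //.
  case: (ord4_cases i) => ->.
  + have := @coef_le R 4 line_sig rho eps c (@s_line R) o0 (false,false)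
      (fun w => if line_recv w o3 then 1 else 0) Hr He.
    rewrite U0 => H; apply: le_trans (H _) V0 => w _ _.
    exact: (prod_le_k (k := o3) (fun j => s_line_valid R j (line_sig w j))).
  + have := @coef_le R 4 line_sig rho eps c (@s_line R) o1 (false,false)
      (fun w => if line_recv w o3 then 1 else 0) Hr He.
    rewrite U1 => H; apply: le_trans (H _) V1 => w _ _.
    exact: (prod_le_k (k := o3) (fun j => s_line_valid R j (line_sig w j))).
  + have := @coef_le R 4 line_sig rho eps c (@s_line R) o2 (false,false)
      (fun w => if line_recv w o3 then 1 else 0) Hr He.
    rewrite U2 => H; apply: le_trans (H _) V2 => w _ _.
    exact: (prod_le_k (k := o3) (fun j => s_line_valid R j (line_sig w j))).
  + have := @coef_le R 4 line_sig rho eps c (@s_line R) o3 (false,false)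
      (fun w => if line_recv w o2 then 1 else 0) Hr He.
    rewrite U3 => H; apply: le_trans (H _) V3 => w _ _.
    exact: (prod_le_k (k := o2) (fun j => s_line_valid R j (line_sig w j))).
Qed.

Lemma cyc_zero (R : realType) (rho eps c : R) (s : profile R) :
  0 <= rho <= 1 -> 0 <= eps <= 1 ->
  rho*eps - c*(1-rho+rho*eps) < 0 ->
  rho*(1-eps)*eps - c*(1-rho*(1-eps)^+2) < 0 ->
  rho*(1-eps)^+4*eps - c*(rho*(1-eps)^+3*(1-(1-eps)^+2)) < 0 ->
  rho*(1-eps)*((1-eps)^+4 + (1-(1-eps)^+2)^+2) - c*(rho*(1-eps)) < 0 ->
  is_BNE cycle_sig rho eps c s ->
  prob_all_adopt cycle_sig rho eps s = 0.
Proof.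
move=> Hr He N1 N2 N3 N5 HB.
have Hv := HB.1.
have Fv : forall w, forall j, 0 <= s j (cycle_sig w j) <= 1 by move=> w j; exact: Hv.
have le1 : forall j t, s j t <= 1 by move=> j t; case/andP: (Hv j t).
have h1 : s o0 (false,false) = 0.
  apply: (dev_zero HB).
  have := @coef_le R 5 cycle_sig rho eps c s o0 (false,false) (fun _ => 1) Hr He.
  rewrite C1 => H; apply: le_lt_trans (H _) N1 => w _ _.
  apply: le_trans (prod_le_k (i := o0) (k := o1) (Fv w) isT) (le1 _ _). 
have h2 : s o1 (false,false) = 0.
  apply: (dev_zero HB).
  have := @coef_le R 5 cycle_sig rho eps c s o1 (false,false)
    (fun w => if cyc_r1 w then 1 else 0) Hr He.
  rewrite C2 => H; apply: le_lt_trans (H _) N2 => w _ _.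
  apply: le_trans (prod_le_k (i := o1) (k := o0) (Fv w) isT) _.
  by rewrite /cycle_sig /o0 /=; case: cyc_r1; [exact: le1 | rewrite h1].
have h4 : s o3 (false,false) = 0.
  apply: (dev_zero HB).
  have := @coef_le R 5 cycle_sig rho eps c s o3 (false,false)
    (fun w => if cyc_r1 w then 1 else 0) Hr He.
  rewrite C4 => H; apply: le_lt_trans (H _) N2 => w _ _.
  apply: le_trans (prod_le_k (i := o3) (k := o0) (Fv w) isT) _.
  by rewrite /cycle_sig /o0 /=; case: cyc_r1; [exact: le1 | rewrite h1].
have h3a : s o2 (true,false) = 0.
  apply: (dev_zero HB).
  have := @coef_le R 5 cycle_sig rho eps c s o2 (true,false)
    (fun w => if cyc_r4 w then 1 else 0) Hr He.
  rewrite C3a => H; apply: le_lt_trans (H _) N3 => w _ _.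
  apply: le_trans (prod_le_k (i := o2) (k := o3) (Fv w) isT) _.
  by rewrite /cycle_sig /o3 /=; case: cyc_r4; [exact: le1 | rewrite h4].
have h3b : s o2 (false,true) = 0.
  apply: (dev_zero HB).
  have := @coef_le R 5 cycle_sig rho eps c s o2 (false,true)
    (fun w => if cyc_r2 w then 1 else 0) Hr He.
  rewrite C3b => H; apply: le_lt_trans (H _) N3 => w _ _.
  apply: le_trans (prod_le_k (i := o2) (k := o1) (Fv w) isT) _.
  by rewrite /cycle_sig /o1 /=; case: cyc_r2; [exact: le1 | rewrite h2].
have h5 : s o0 (true,false) = 0.
  apply: (dev_zero HB).
  have := @coef_le R 5 cycle_sig rho eps c s o0 (true,false)
    (fun w => if cyc_from2 w == cyc_from4 w then 1 else 0) Hr He.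
  rewrite C5 => H; apply: le_lt_trans (H _) N5 => w _ _.
  apply: le_trans (prod_le_k (i := o0) (k := o2) (Fv w) isT) _.
  rewrite /cycle_sig /o2 /=; case: cyc_from2; case: cyc_from4 => /=;
    by [exact: le1 | rewrite ?h3a ?h3b].
apply: big1 => w _; rewrite big_ord_recl.
have -> : (ord0 : 'I_4) = o0 by apply: val_inj.
have -> : s o0 (cycle_sig w o0) = 0.
  by rewrite /cycle_sig /o0 /=; case: cyc_r1; [rewrite h5 | rewrite h1].
by rewrite mul0r mulr0.
Qed.

Lemma powfacts (R : realType) (x : R) : 7/8 < x -> x < 1 ->
  [/\ 0 < x^+2, x^+2 <= x, 0 < x^+3, x^+3 <= x^+2 & (0 < x^+4 /\ x^+4 <= x^+3 /\ 1/2 < x^+4)].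
Proof.
move=> h0 h1.
have X2 : x^+2 = x*x by rewrite expr2.
have X3 : x^+3 = x^+2*x by rewrite exprSr.
have X4 : x^+4 = x^+3*x by rewrite exprSr.
have a1 : 49/64 < x^+2 by rewrite X2; nra.
have a2 : x^+2 <= x by rewrite X2; nra.
have a3 : x^+3 <= x^+2 by rewrite X3; nra.
have a4 : x^+4 <= x^+3 by rewrite X4; nra.
have a5 : 0 < x^+3 by rewrite X3; nra.
have a6 : 1/2 < x^+4 by rewrite X4 X3; nra.
split; try lra; split; lra.
Qed.

Lemma numeric (R : realType) (rho eps c x : R) :
  0 < rho < 1 -> 0 < eps -> eps < (1-rho)/8 -> x = 1 - eps ->
  x^+4 + 4*eps^+2 < c -> c < x^+3 ->
  [/\ rho*eps - c*(1-rho+rho*eps) < 0,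
      rho*x*eps - c*(1-rho*x^+2) < 0,
      rho*x^+4*eps - c*(rho*x^+3*(1-x^+2)) < 0,
      rho*x*(x^+4 + (1-x^+2)^+2) - c*(rho*x) < 0 &
   [/\ 0 <= rho*x^+4 - c*(rho*x),
      0 <= rho*x^+4 - c*(rho*x^+2),
      0 <= rho*x^+4 - c*(rho*x^+3),
      0 <= rho*x^+4 - c*(rho*x^+4) &
   [/\ - c*(1 - rho*x) <= 0,
      - c*(1 - rho*x^+2) <= 0,
      - c*(1 - rho*x^+3) <= 0 &
      rho*x^+3*eps - c*(1 - rho*x^+4) <= 0]]].
Proof.
move=> /andP[r0 r1] e0 e1 Hx ca cb.
have h0 : 7/8 < x by rewrite Hx; lra.
have h1 : x < 1 by rewrite Hx; lra.
have [p2 q2 p3 q3 [p4 [q4 s4]]] := powfacts h0 h1.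
have c0 : 1/2 < c by nra.
have c1 : c < 1 by lra.
have re : rho*eps < (1-rho)/8 by nra.
have cr : (1-rho)/2 < c*(1-rho) by nra.
have cre : 0 <= c*(rho*eps) by apply: mulr_ge0; [lra | apply: mulr_ge0; lra].
have rhoe : 0 <= rho*eps by apply: mulr_ge0; lra.
have rx : forall y, 0 < y -> y <= 1 -> rho * y < 1 by move=> y y0 y1; nra.
have rxe : forall y, 0 < y -> y <= 1 -> rho * y * eps <= rho * eps.
  by move=> y y0 y1; nra.
have cx : forall y, 0 < y -> y <= 1 -> c * (rho * y) <= c * rho.
  move=> y y0 y1; have : 0 <= c * rho by apply: mulr_ge0; lra.
  by nra.
split.
- lra.
- have := rxe x ltac:(lra) ltac:(lra); have := cx (x^+2) p2 ltac:(lra); nra.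
- have -> : rho*x^+4*eps - c*(rho*x^+3*(1-x^+2)) = (rho*x^+3*eps)*(x - c*(1+x)).
    by rewrite Hx; ring.
  rewrite pmulr_rlt0; first nra.
  by apply: mulr_gt0 => //; apply: mulr_gt0.
- have -> : rho*x*(x^+4 + (1-x^+2)^+2) - c*(rho*x) = (rho*x)*(x^+4 + (1-x^+2)^+2 - c).
    by ring.
  rewrite pmulr_rlt0; last by apply: mulr_gt0; lra.
  have -> : 1 - x^+2 = eps*(1+x) by rewrite Hx; ring.
  have : eps*(1+x) <= 2*eps by nra.
  have : 0 <= eps*(1+x) by nra.
  move=> u v; have : (eps*(1+x))^+2 <= (2*eps)^+2.
    by rewrite ler_pXn2r // ?nnegrE //; lra.
  rewrite exprMn; nra.
- split.
  + have -> : rho*x^+4 - c*(rho*x) = (rho*x)*(x^+3 - c) by ring.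
    apply: mulr_ge0; [apply: mulr_ge0 | ]; lra.
  + have -> : rho*x^+4 - c*(rho*x^+2) = (rho*x^+2)*(x^+2 - c) by ring.
    apply: mulr_ge0; [apply: mulr_ge0 | ]; lra.
  + have -> : rho*x^+4 - c*(rho*x^+3) = (rho*x^+3)*(x - c) by ring.
    apply: mulr_ge0; [apply: mulr_ge0 | ]; lra.
  + have -> : rho*x^+4 - c*(rho*x^+4) = (rho*x^+4)*(1 - c) by ring.
    apply: mulr_ge0; [apply: mulr_ge0 | ]; lra.
  + split.
    * have := rx x ltac:(lra) ltac:(lra); nra.
    * have := rx (x^+2) ltac:(lra) ltac:(lra); nra.
    * have := rx (x^+3) ltac:(lra) ltac:(lra); nra.
    * have := rxe (x^+3) ltac:(lra) ltac:(lra); have := cx (x^+4) ltac:(lra) ltac:(lra); nra.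
Qed.

Theorem mainTheorem9 (R : realType) (rho : R) :
  0 < rho < 1 ->
  exists eps0 : R, 0 < eps0 /\
    forall eps : R, 0 < eps -> eps < 1 -> eps < eps0 ->
      exists a b : R, 0 <= a /\ a < b /\ b <= 1 /\
        forall c : R, a < c < b ->
          exists s : profile R,
            is_BNE line_sig rho eps c s /\
            forall s' : profile R, is_BNE cycle_sig rho eps c s' ->
              prob_all_adopt cycle_sig rho eps s' < prob_all_adopt line_sig rho eps s.
Proof.
move=> Hrho; have /andP[r0 r1] := Hrho.
exists ((1 - rho)/8); split; first lra.
move=> eps e0 e1 e2.
have h0 : 7/8 < 1 - eps by lra.
have h1 : 1 - eps < 1 by lra.
have [p2 q2 p3 q3 [p4 [q4 s4]]] := powfacts h0 h1.
exists ((1-eps)^+4 + 4*eps^+2), ((1-eps)^+3).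
split; first by apply: addr_ge0; [lra | apply: mulr_ge0; [lra | exact: sqr_ge0]].
split.
  rewrite -subr_gt0.
  have -> : (1-eps)^+3 - ((1-eps)^+4 + 4*eps^+2) = eps * ((1-eps)^+3 - 4 * eps).
    by ring.
  by apply: mulr_gt0 => //; lra.
split; first lra.
move=> c /andP[ca cb].
have [N1 N2 N3 N5 [M0 M1 M2 M3 [V0 V1 V2 V3]]] :=
  numeric Hrho e0 e2 (erefl (1 - eps)) ca cb.
have Hr : 0 <= rho <= 1 by apply/andP; split; lra.
have He : 0 <= eps <= 1 by apply/andP; split; lra.
exists (@s_line R); split.
  exact: line_bne.
move=> s' Hs'.
rewrite (cyc_zero Hr He N1 N2 N3 N5 Hs') Pline.
by apply: mulr_gt0 => //.
Qed.
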